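(* Let $C_{\mathrm{hyp}}\ge1$ and let $t=v-h(r)$ on the domain of outer communication $\{r>r_+\}$ of a subextreme Kerr spacetime, where $h(r)=2(r-r_+)+4M\log\left(\frac{r}{r_+}\right)+\frac{3M^2(r_+-r)^2}{r_+r^2}+2M\arctan\left(\frac{(C_{\mathrm{hyp}}-1)M}{r}\right)-2M\arctan\left(\frac{(C_{\mathrm{hyp}}-1)M}{r_+}\right)$. Then $t$ is a regular, future hyperboloidal time function. Further, $h(r_+)=0$, $h'(r)\ge0$ for $r\ge r_+$, $\lim_{r\to\infty}h(r)/r=2$, and $\lim_{r\to\infty}\frac{r^2}{M^2}V^a\nabla_at=C_{\mathrm{hyp}}$.
   Context: Kerr spacetime with $M>0$, $|a|<M$, in ingoing Eddington–Finkelstein coordinates $(v,r,\theta,\phi)$ with metric $g_{ab}=-2(dr)_{(a}(dv)_{b)}+2a\sin^2\theta(d\phi)_{(a}(dr)_{b)}+\frac{4Mar\sin^2\theta}{\Sigma}(d\phi)_{(a}(dv)_{b)}+\frac{\Delta-a^2\sin^2\theta}{\Sigma}(dv)_a(dv)_b+\frac{a^2\sin^2\theta\Delta-(a^2+r^2)^2}{\Sigma}\sin^2\theta(d\phi)_a(d\phi)_b-\Sigma(d\theta)_a(d\theta)_b$, $\Sigma=r^2+a^2\cos^2\theta$, $\Delta=r^2-2Mr+a^2$, $r_+=M+\sqrt{M^2-a^2}$. Vector fields $V^a=\partial_v+\frac{\Delta}{2(a^2+r^2)}\partial_r+\frac{a}{a^2+r^2}\partial_\phi$, $Y^a=-\partial_r$.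 A function $t=v-k(r)$ is a regular, future hyperboloidal time function if: (a) $k$ is smooth in an open neighbourhood of $[r_+,\infty)$; (b) $K(R)=k'(1/R)$ is smooth in an open neighbourhood of $[0,1/r_+]$; (c) the level sets of $t$ are strictly spacelike in $\{r>r_+\}$; (d) $\lim_{r\to\infty}\frac{r^2}{M^2}V^a\nabla_at$ exists and is positive; (e) $\lim_{r\to\infty}Y^a\nabla_at=2$. *)

(* Defs.v *)
From Stdlib Require Import Reals.
From Coquelicot Require Import Coquelicot.
Open Scope R_scope.

Definition Sigma (a r th : R) : R := r^2 + a^2 * (cos th)^2.
Definition Delta (M a r : R) : R := r^2 - 2*M*r + a^2.
Definition rplus (M a : R) : R := M + sqrt (M^2 - a^2).

Record vec4 := mkvec4 { Xv : R; Xr : R; Xth : R; Xph : R }.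

(* The quadratic form g_{ab} X^a X^b of the Kerr metric in ingoing
   Eddington--Finkelstein coordinates at the point (r, theta)
   (the metric is independent of v and phi). *)
Definition kerr_g (M a r th : R) (X : vec4) : R :=
  let s2 := (sin th)^2 in
  let S := Sigma a r th in
  let D := Delta M a r in
  - 2 * Xr X * Xv X
  + 2 * a * s2 * Xph X * Xr X
  + (4 * M * a * r * s2 / S) * Xph X * Xv X
  + ((D - a^2 * s2) / S) * (Xv X)^2
  + ((a^2 * s2 * D - (a^2 + r^2)^2) / S) * s2 * (Xph X)^2
  - S * (Xth X)^2.

Definition dt_apply (k : R -> R) (r : R) (X : vec4) : R :=
  Xv X - Derive k r * Xr X.

Definition Vfield (M a r : R) : vec4 :=
  mkvec4 1 (Delta M a r / (2 * (a^2 + r^2))) 0 (a / (a^2 + r^2)).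
Definition Yfield : vec4 := mkvec4 0 (-1) 0 0.

Definition Vt (M a : R) (k : R -> R) (r : R) : R := dt_apply k r (Vfield M a r).
Definition Yt (k : R -> R) (r : R) : R := dt_apply k r Yfield.

Definition smooth_on (U : R -> Prop) (f : R -> R) : Prop :=
  forall (n : nat) (x : R), U x -> ex_derive_n f n x.

Definition regular_future_hyperboloidal (M a : R) (k : R -> R) : Prop :=
  (exists U : R -> Prop, open U /\ (forall r, rplus M a <= r -> U r) /\ smooth_on U k) /\
  (exists (U : R -> Prop) (K : R -> R), open U /\
      (forall R0, 0 <= R0 <= / rplus M a -> U R0) /\ smooth_on U K /\
      (forall R0, U R0 -> 0 < R0 -> K R0 = Derive k (/ R0))) /\
  (* (c) level sets strictly spacelike in r > r_+: the induced metric on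
     the tangent space {X | dt(X) = 0} is negative definite
     (signature (+,-,-,-); theta restricted to (0,pi), off the coordinate axis) *)
  (forall r th (X : vec4), rplus M a < r -> 0 < th < PI ->
      dt_apply k r X = 0 -> X <> mkvec4 0 0 0 0 -> kerr_g M a r th X < 0) /\
  (exists L : R, is_lim (fun r => r^2 / M^2 * Vt M a k r) p_infty L /\ 0 < L) /\
  is_lim (fun r => Yt k r) p_infty 2.

Definition hyp_h (M a C : R) (r : R) : R :=
  let rp := rplus M a in
  2 * (r - rp) + 4 * M * ln (r / rp)
  + 3 * M^2 * (rp - r)^2 / (rp * r^2)
  + 2 * M * atan ((C - 1) * M / r)
  - 2 * M * atan ((C - 1) * M / rp).

(* Main.v *)
Require Import Defs.
From Stdlib Require Import Reals Lra Psatz.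
From Coquelicot Require Import Coquelicot.
Open Scope R_scope.


Lemma smooth_step (D : R -> Prop) (f f' : R -> R) :
  open D -> (forall x, D x -> is_derive f x (f' x)) ->
  forall n x, D x -> ex_derive_n f' n x -> ex_derive_n f (S n) x.
Proof.
  intros HD Hd n x Hx Hs.
  destruct n as [|n].
  - simpl. exists (f' x). apply Hd; auto.
  - change (ex_derive (Derive_n f (S n)) x).
    apply (ex_derive_ext (fun y => Derive_n (Derive f) n y)).
    { intros t. rewrite (Derive_n_comp f n 1). rewrite Nat.add_1_r. reflexivity. }
    change (ex_derive_n (Derive f) (S n) x).
    apply (ex_derive_n_ext_loc f').
    + apply (filter_imp D); [|apply HD; auto].
      intros y Hy. symmetry. apply is_derive_unique. apply Hd; auto.
    + auto.
Qed.

Lemma smooth_from_deriv (D : R -> Prop) (f f' : R -> R) :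
  open D -> (forall x, D x -> is_derive f x (f' x)) ->
  (forall n x, D x -> ex_derive_n f' n x) ->
  forall n x, D x -> ex_derive_n f n x.
Proof.
  intros HD Hd Hs n x Hx. destruct n as [|n]; [exact I|].
  apply (smooth_step D f f'); auto.
Qed.

Inductive Alg (D : R -> Prop) : (R -> R) -> Prop :=
| A_const c : Alg D (fun _ => c)
| A_id : Alg D (fun x => x)
| A_inv : (forall x, D x -> x <> 0) -> Alg D (fun x => / x)
| A_wq al be : (forall x, D x -> al * x^2 + be <> 0) -> Alg D (fun x => / (al * x^2 + be))
| A_plus f g : Alg D f -> Alg D g -> Alg D (fun x => f x + g x)
| A_mult f g : Alg D f -> Alg D g -> Alg D (fun x => f x * g x).

Lemma Alg_deriv D f : Alg D f -> exists f', Alg D f' /\ forall x, D x -> is_derive f x (f' x).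
Proof.
  induction 1.
  - exists (fun _ => 0). split; [constructor|]. intros. auto_derive; auto.
  - exists (fun _ => 1). split; [constructor|]. intros. auto_derive; auto.
  - exists (fun x => (-1) * ((/ x) * (/ x))). split.
    + apply A_mult; [constructor|]. apply A_mult; constructor; auto.
    + intros x Hx. auto_derive. auto. field. auto.
  - exists (fun x => (-2 * al) * (x * ((/ (al * x^2 + be)) * (/ (al * x^2 + be))))). split.
    + apply A_mult; [constructor|]. apply A_mult; [constructor|].
      apply A_mult; constructor; auto.
    + intros x Hx. specialize (H x Hx). auto_derive.
      * replace (al * (x * (x * 1)) + be) with (al * x^2 + be) by ring. auto.
      * field. auto.
  - destruct IHAlg1 as [f' [A1 D1]]. destruct IHAlg2 as [g' [A2 D2]].
    exists (fun x => f' x + g' x). split. constructor; auto.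
    intros. apply (is_derive_plus f g); auto.
  - destruct IHAlg1 as [f' [A1 D1]]. destruct IHAlg2 as [g' [A2 D2]].
    exists (fun x => f' x * g x + f x * g' x). split.
    constructor; constructor; auto.
    intros. apply (is_derive_mult f g); auto. intros; apply Rmult_comm.
Qed.

Lemma Alg_smooth D f : open D -> Alg D f -> forall n x, D x -> ex_derive_n f n x.
Proof.
  intros HD HA n. revert f HA. induction n as [|n IH]; intros f HA x Hx.
  - exact I.
  - destruct (Alg_deriv D f HA) as [f' [A' D']].
    apply (smooth_step D f f'); auto.
Qed.
Lemma Ft_neg t q p : 0 < t < 1 -> 0 < q -> 1 <= p ->
  (-4+2*p-p^2)+(4-8*p)*t-28*t^2+12*t^3+8*q*t*(t-1)*(6*t^2-3*t+4)
  -12*q^2*t^2*(1-t)^2*(3*t^2+5)-72*q^3*t^3*(1-t)^3 < 0.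
Proof.
  intros Ht Hq Hp.
  assert (h1: 8*q*t*(t-1)*(6*t^2-3*t+4) <= 0).
  { assert (0 < 6*t^2-3*t+4) by nra. assert (0 < q*t) by nra.
    assert (0 <= q*t*(1-t)) by nra. nra. }
  assert (h2: 0 <= q^2*t^2*(1-t)^2*(3*t^2+5)).
  { repeat apply Rmult_le_pos; nra. }
  assert (h3: 0 <= q^3*t^3*(1-t)^3).
  { rewrite <- !Rpow_mult_distr. apply pow_le. nra. }
  assert (h4: t^3 <= t^2) by nra.
  nra.
Qed.

Lemma P1g_neg M rp r : 0 < M -> M <= rp -> rp < r ->
  (r^2-2*M*r+(2*M*rp - rp^2))*(2 + 4*M/r + 6*M^2*(r-rp)/r^3)^2
  - 2*(r^2+(2*M*rp - rp^2))*(2 + 4*M/r + 6*M^2*(r-rp)/r^3) + (2*M*rp - rp^2) < 0.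
Proof.
  intros HM Hrp Hr.
  assert (E : (r^2-2*M*r+(2*M*rp - rp^2))*(2 + 4*M/r + 6*M^2*(r-rp)/r^3)^2
  - 2*(r^2+(2*M*rp - rp^2))*(2 + 4*M/r + 6*M^2*(r-rp)/r^3) + (2*M*rp - rp^2)
  = M^2 * (let t := rp/r in let q := M/rp in let p := rp/M in
   (-4+2*p-p^2)+(4-8*p)*t-28*t^2+12*t^3+8*q*t*(t-1)*(6*t^2-3*t+4)
  -12*q^2*t^2*(1-t)^2*(3*t^2+5)-72*q^3*t^3*(1-t)^3)).
  { simpl. field. repeat split; lra. }
  rewrite E.
  assert (0 < M^2) by nra.
  cut ((let t := rp/r in let q := M/rp in let p := rp/M in
   (-4+2*p-p^2)+(4-8*p)*t-28*t^2+12*t^3+8*q*t*(t-1)*(6*t^2-3*t+4)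
  -12*q^2*t^2*(1-t)^2*(3*t^2+5)-72*q^3*t^3*(1-t)^3) < 0). { intros; nra. }
  simpl. apply Ft_neg.
  - split. apply Rdiv_lt_0_compat; lra. apply Rmult_lt_reg_r with r. lra. field_simplify; lra.
  - apply Rdiv_lt_0_compat; lra.
  - apply Rmult_le_reg_r with M. lra. field_simplify; lra.
Qed.
Lemma form_identity M a r s co p xr xth xph : co = 1 - s ->
  r^2 + a^2*co <> 0 ->
  let S := r^2 + a^2*co in let D := r^2 - 2*M*r + a^2 in let Q := r^2 + a^2 in
  let u := a^2 * s in
  let Cc := s*(u*D - Q^2) in let B := a*s*(S + 2*M*r*p) in
  Cc * S * (- 2 * xr * (p*xr)
  + 2 * a * s * xph * xr
  + (4 * M * a * r * s / S) * xph * (p*xr)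
  + ((D - a^2 * s) / S) * (p*xr)^2
  + ((a^2 * s * D - (a^2 + r^2)^2) / S) * s * xph^2
  - S * xth^2)
  = (Cc*xph + B*xr)^2 - s*S^2*(D*p^2 - 2*Q*p + u)*xr^2 - Cc*S^2*xth^2.
Proof.
  intros Hco HS S D Q u Cc B. subst S D Q u Cc B. rewrite Hco in *. field. auto.
Qed.

Lemma form_neg M a r th p X : 0 < M -> a^2 < M^2 -> 0 < r -> 
  0 < r^2 - 2*M*r + a^2 -> 0 < th < PI ->
  (r^2-2*M*r+a^2)*p^2 - 2*(r^2+a^2)*p + a^2 < 0 ->
  Xv X = p * Xr X -> X <> mkvec4 0 0 0 0 -> kerr_g M a r th X < 0.
Proof.
  intros HM Ha Hr HD Hth HP HXv HX.
  destruct X as [xv xr xth xph]. simpl in HXv. subst xv.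
  unfold kerr_g, Sigma, Delta. cbv zeta. simpl Xv; simpl Xr; simpl Xth; simpl Xph.
  assert (Hsin : 0 < sin th) by (apply sin_gt_0; lra).
  assert (Hsc := sin2_cos2 th). unfold Rsqr in Hsc.
  set (s := sin th ^ 2). set (co := cos th ^ 2).
  assert (Hco : co = 1 - s) by (unfold co, s; simpl; lra).
  assert (Hs0 : 0 < s) by (unfold s; simpl; nra).
  assert (Hs1 : s <= 1) by (unfold co, s in *; simpl in *; nra).
  assert (Hco0 : 0 <= co) by (unfold co; simpl; nra).
  assert (HS : 0 < r^2 + a^2*co) by nra.
  match goal with |- ?G < 0 => set (g := G) end.
  assert (Hid := form_identity M a r s co p xr xth xph Hco (Rgt_not_eq _ _ HS)).
  cbv zeta in Hid.
  set (S := r^2 + a^2*co) in *.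
  set (D := r^2 - 2*M*r + a^2) in *. set (Q := r^2 + a^2) in *.
  assert (Hid2 : s*(a^2*s*D - Q^2) * S * g =
     (s*(a^2*s*D - Q^2)*xph + a*s*(S + 2*M*r*p)*xr)^2 - s*S^2*(D*p^2 - 2*Q*p + a^2*s)*xr^2
     - s*(a^2*s*D - Q^2)*S^2*xth^2).
  { unfold g, Delta. exact Hid. }
  clear Hid.
  assert (HQ : D < Q) by (unfold D, Q; nra).
  assert (HQ0 : 0 < Q) by (unfold Q; nra).
  assert (Hu : a^2*s <= a^2) by nra.
  assert (Hu2 : a^2 * s < Q) by (unfold Q; nra).
  assert (HCc : s*(a^2*s*D - Q^2) < 0).
  { assert (a^2*s*D < Q^2) by nra. nra. }
  assert (HPs : D*p^2 - 2*Q*p + a^2*s < 0) by lra.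
  set (Cc := s*(a^2*s*D - Q^2)) in *.
  set (Pp := D*p^2 - 2*Q*p + a^2*s) in *.
  set (B := a*s*(S + 2*M*r*p)) in *.
  assert (Hpos : 0 < (Cc*xph + B*xr)^2 - s*S^2*Pp*xr^2 - Cc*S^2*xth^2).
  { assert (0 < S^2) by (apply pow2_gt_0; lra). assert (0 < s*S^2) by (apply Rmult_lt_0_compat; lra).
    assert (0 <= (Cc*xph + B*xr)^2) by apply pow2_ge_0.
    destruct (Req_dec xr 0) as [E1|E1].
    - subst xr. destruct (Req_dec xth 0) as [E2|E2].
      + subst xth. destruct (Req_dec xph 0) as [E3|E3].
        * subst xph. exfalso. apply HX. f_equal; ring.
        * assert (0 < (Cc*xph)^2). { rewrite Rpow_mult_distr. apply Rmult_lt_0_compat; apply pow2_gt_0; lra. }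
          replace ((Cc * xph + B * 0) ^ 2 - s * S ^ 2 * Pp * 0 ^ 2 - Cc * S ^ 2 * 0 ^ 2) with ((Cc*xph)^2) by ring. lra.
      + assert (0 < xth^2) by (apply pow2_gt_0; auto).
        assert (0 < (-Cc)*S^2*xth^2) by (apply Rmult_lt_0_compat; [apply Rmult_lt_0_compat|]; lra).
        assert (E: s*S^2*Pp*0^2 = 0) by ring. rewrite E.
        assert (E': (-Cc)*S^2*xth^2 = - (Cc*S^2*xth^2)) by ring. lra.
    - assert (0 < xr^2) by (apply pow2_gt_0; auto).
      assert (0 < s*S^2*(-Pp)*xr^2) by (apply Rmult_lt_0_compat; [apply Rmult_lt_0_compat|]; lra).
      assert (0 <= (-Cc)*S^2*xth^2).
      { apply Rmult_le_pos. apply Rmult_le_pos; lra. apply pow2_ge_0. }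
      assert (E: (-Cc)*S^2*xth^2 = - (Cc*S^2*xth^2)) by ring.
      assert (E': s*S^2*(-Pp)*xr^2 = - (s*S^2*Pp*xr^2)) by ring. lra. }
  assert (0 < S) by auto.
  assert (0 < (-Cc) * S) by (apply Rmult_lt_0_compat; lra).
  destruct (Rlt_or_le g 0) as [Hg|Hg]; auto.
  assert (0 <= (-Cc) * S * g) by (apply Rmult_le_pos; lra).
  assert (E: (-Cc) * S * g = - (Cc * S * g)) by ring. lra.
Qed.

Lemma lim_via_inv (f F : R -> R) : ex_derive F 0 ->
  (forall r, 0 < r -> f r = F (/ r)) -> is_lim f p_infty (F 0).
Proof.
  intros HF Hf. apply is_lim_ext_loc with (fun r => F (/ r)).
  { exists 0. intros; symmetry; apply Hf; auto. }
  apply (is_lim_comp_continuous (fun r => / r) F p_infty 0).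
  - apply (is_lim_inv (fun y => y) p_infty p_infty (is_lim_id _)). discriminate.
  - exact (@ex_derive_continuous R_AbsRing R_NormedModule F 0 HF).
Qed.

Lemma rp_facts M a : 0 < M -> Rabs a < M ->
  M <= rplus M a /\ a^2 = 2*M*rplus M a - (rplus M a)^2 /\ a^2 < M^2.
Proof.
  intros HM Ha. unfold rplus.
  assert (a^2 < M^2). { rewrite <- pow2_abs. assert (0 <= Rabs a) by apply Rabs_pos. nra. }
  assert (Hs := sqrt_sqrt (M^2 - a^2)). assert (0 <= sqrt (M^2-a^2)) by apply sqrt_pos.
  repeat split; try nra. 
Qed.

Definition hpA M rp c (x : R) : R :=
  2 + 4*M*(/x) + 6*M^2*((/x)*(/x)) + (-6*M^2*rp)*((/x)*((/x)*(/x))) + (-2*M*c)*(/(1*x^2 + c^2)).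

Definition KA M rp c (x : R) : R :=
  2 + 4*M*x + 6*M^2*(x*x) + (-6*M^2*rp)*(x*(x*x)) + (-2*M*c)*((x*x)*(/(c^2*x^2 + 1))).

Lemma h_deriv M a C r : 0 < M -> Rabs a < M -> 0 < r ->
  is_derive (hyp_h M a C) r (hpA M (rplus M a) ((C-1)*M) r).
Proof.
  intros HM Ha Hr. destruct (rp_facts M a HM Ha) as [H1 [H2 H3]].
  unfold hyp_h, hpA. set (rp := rplus M a) in *. set (c := (C-1)*M).
  assert (0 < rp) by lra.
  assert (0 < r^2) by nra. assert (0 <= c^2) by nra.
  auto_derive.
  - repeat split; try lra. apply Rdiv_lt_0_compat; lra.
    assert (0 < rp * (r * (r * 1))) by (apply Rmult_lt_0_compat; nra). lra.
  - field. repeat split; try lra.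
Qed.

Lemma hpA_bounds M rp c r : 0 < M -> 0 < rp -> rp <= r -> 0 <= c ->
  2 <= hpA M rp c r /\ hpA M rp c r <= 2 + 4*M/r + 6*M^2*(r-rp)/r^3.
Proof.
  intros HM Hrp Hr Hc. unfold hpA.
  assert (Hr0 : 0 < r) by lra.
  assert (E : 6*M^2*((/r)*(/r)) + (-6*M^2*rp)*((/r)*((/r)*(/r))) = 6*M^2*(r-rp)/r^3) by (field; lra).
  assert (Hq : 0 < 1*r^2 + c^2) by nra.
  assert (A1 : 0 <= 2*M*c*(/(1*r^2+c^2))).
  { apply Rmult_le_pos. nra. left. apply Rinv_0_lt_compat. lra. }
  assert (A2 : 2*M*c*(/(1*r^2+c^2)) <= M/r).
  { apply Rmult_le_reg_r with ((1*r^2+c^2)*r). nra.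
    replace (2 * M * c * / (1 * r ^ 2 + c ^ 2) * ((1 * r ^ 2 + c ^ 2) * r)) with (2*M*c*r) by (field; lra).
    replace (M / r * ((1 * r ^ 2 + c ^ 2) * r)) with (M*(r^2+c^2)) by (field; lra).
    assert (0 <= M*(r-c)^2) by (apply Rmult_le_pos; [lra| apply pow2_ge_0]).
    assert (E2 : M*(r^2+c^2) - 2*M*c*r = M*(r-c)^2) by ring. lra. }
  assert (A3 : 0 <= 6*M^2*(r-rp)/r^3).
  { apply Rmult_le_pos. nra. left. apply Rinv_0_lt_compat. apply pow_lt. lra. }
  assert (A4 : 0 < M/r) by (apply Rdiv_lt_0_compat; lra).
  assert (A5 : 4*M*(/r) = 4 * (M/r)) by (unfold Rdiv; ring).
  split; lra.
Qed.

Lemma conv_neg D Q A2 p g : 0 <= D -> 2 <= p <= g ->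
  D*2^2 - 2*Q*2 + A2 < 0 -> D*g^2 - 2*Q*g + A2 < 0 -> D*p^2 - 2*Q*p + A2 < 0.
Proof.
  intros HD Hp H2 Hg.
  destruct (Req_dec g 2) as [E|E].
  - subst. assert (p = 2) by lra. subst. lra.
  - assert (Hid : (g-2)*(D*p^2 - 2*Q*p + A2) = (g-p)*(D*2^2 - 2*Q*2 + A2) + (p-2)*(D*g^2 - 2*Q*g + A2)
       + (g-2)*D*(p-2)*(p-g)) by ring.
    assert (0 <= (g-2)*D*(p-2)*(g-p)).
    { repeat apply Rmult_le_pos; lra. }
    assert ((g-p)*(D*2^2 - 2*Q*2 + A2) + (p-2)*(D*g^2 - 2*Q*g + A2) < 0).
    { destruct (Req_dec p g). subst. nra. nra. }
    assert (0 < g - 2) by lra. nra.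
Qed.

Lemma hpA_alg M rp c : Alg (fun x => 0 < x) (hpA M rp c).
Proof.
  unfold hpA.
  assert (Hi : forall x, 0 < x -> x <> 0) by (intros; lra).
  repeat apply A_plus; repeat apply A_mult; try apply A_const; try apply A_inv; auto.
  apply A_wq. intros x Hx. assert (0 < x^2) by nra. assert (0 <= c^2) by nra. lra.
Qed.

Lemma KA_alg M rp c : Alg (fun _ => True) (KA M rp c).
Proof.
  unfold KA.
  repeat apply A_plus; repeat apply A_mult; try apply A_const; try apply A_id.
  apply A_wq. intros x _. assert (0 <= x^2) by nra. assert (0 <= c^2) by nra. nra.
Qed.

Theorem lemma2p21 (M a C : R) :
  0 < M -> Rabs a < M -> 1 <= C ->
  regular_future_hyperboloidal M a (hyp_h M a C) /\
  hyp_h M a C (rplus M a) = 0 /\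
  (forall r, rplus M a <= r -> 0 <= Derive (hyp_h M a C) r) /\
  is_lim (fun r => hyp_h M a C r / r) p_infty 2 /\
  is_lim (fun r => r^2 / M^2 * Vt M a (hyp_h M a C) r) p_infty C.
Proof.
  intros HM Ha HC.
  destruct (rp_facts M a HM Ha) as [H1 [H2 H3]].
  set (rp := rplus M a) in *.
  set (c := (C-1)*M).
  assert (Hrp : 0 < rp) by lra.
  assert (Hc : 0 <= c) by (unfold c; nra).
  assert (HD : forall r, 0 < r -> Derive (hyp_h M a C) r = hpA M rp c r).
  { intros r Hr. apply is_derive_unique. apply h_deriv; auto. }
  assert (Hlim5 : is_lim (fun r => r^2 / M^2 * Vt M a (hyp_h M a C) r) p_infty C).
  { set (F := fun x => (2*M^2 + x*(12*M^3 + 6*M^2*rp - 4*M*a^2) - x^2*(6*M^2*a^2 + 12*M^3*rp)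
        + 6*M^2*rp*a^2*x^3 + 2*M*c*(1 - 2*M*x + a^2*x^2)/(1 + c^2*x^2)) / (2*M^2*(1 + a^2*x^2))).
    assert (F0 : F 0 = C). { unfold F, c. field. lra. }
    replace (Finite C) with (Finite (F 0)) by (rewrite F0; reflexivity).
    apply lim_via_inv.
    - unfold F. auto_derive. split. nra. split; [|auto]. nra.
    - intros r Hr. unfold Vt, dt_apply, Vfield. simpl. unfold Defs.Delta. rewrite HD by auto.
      unfold F, hpA. cbv beta. field. repeat split; try nra. }
  assert (Hbd : forall r, rp <= r -> 2 <= hpA M rp c r /\ hpA M rp c r <= 2 + 4*M/r + 6*M^2*(r-rp)/r^3).
  { intros r Hr. apply hpA_bounds; auto. }
  split; [|split; [|split; [|split]]].
  -
    unfold regular_future_hyperboloidal. fold rp.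
    split; [|split; [|split; [|split]]].
    + exists (fun x => 0 < x). split; [apply open_gt|]. split; [intros; lra|].
      intros n x Hx. apply (smooth_from_deriv (fun x => 0 < x) _ (hpA M rp c)); auto.
      * apply open_gt.
      * intros y Hy. apply h_deriv; auto.
      * intros m y Hy. apply (Alg_smooth (fun x => 0 < x)); auto. apply open_gt. apply hpA_alg.
    + exists (fun _ => True), (KA M rp c). split; [apply open_true|]. split; [auto|]. split.
      * intros n x Hx. apply (Alg_smooth (fun _ => True)); auto. apply open_true. apply KA_alg.
      * intros R0 _ HR0. rewrite HD by (apply Rinv_0_lt_compat; auto).
        unfold KA, hpA. rewrite Rinv_inv. field.
        split; [lra|]. assert (0 <= (c*R0)^2) by apply pow2_ge_0. lra.
    + intros r th X Hr Hth Hdt HX.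
      assert (Hr0 : 0 < r) by lra.
      unfold dt_apply in Hdt. rewrite HD in Hdt by auto.
      apply (form_neg M a r th (hpA M rp c r)); [lra|lra|lra| | lra | | lra | exact HX].
      * rewrite H2. assert (0 < (r - rp)*(r + rp - 2*M)) by (apply Rmult_lt_0_compat; lra).
        assert (E: r^2 - 2*M*r + (2*M*rp - rp^2) = (r - rp)*(r + rp - 2*M)) by ring. lra.
      * destruct (Hbd r (Rlt_le _ _ Hr)) as [B1 B2].
        apply (conv_neg _ _ _ _ (2 + 4*M/r + 6*M^2*(r-rp)/r^3)).
        -- rewrite H2. assert (0 < (r - rp)*(r + rp - 2*M)) by (apply Rmult_lt_0_compat; lra).
           assert (E: r^2 - 2*M*r + (2*M*rp - rp^2) = (r - rp)*(r + rp - 2*M)) by ring. lra.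
        -- lra.
        -- assert (rp >= M) by lra. nra.
        -- rewrite H2. apply P1g_neg; lra.
    + exists C. split; [exact Hlim5|lra].
    + replace (Finite 2) with (Finite (KA M rp c 0)) by (f_equal; unfold KA; ring).
      apply lim_via_inv.
      * unfold KA. auto_derive. nra.
      * intros r Hr. unfold Yt, dt_apply, Yfield. simpl. rewrite HD by auto.
        unfold KA, hpA. field. split; [lra|]. assert (0 < r^2) by nra. assert (0 <= c^2) by nra. lra.
  - unfold hyp_h. cbv zeta. fold rp. replace (rp/rp) with 1 by (field; lra). rewrite ln_1. unfold Rdiv. ring.
  - intros r Hr. rewrite HD by lra. destruct (Hbd r Hr). lra.
  - set (G := fun x => 2 - 2*rp*x - 4*M*ln rp*x + 3*M^2*(rp*x - 1)^2*x/rp + 2*M*(atan (c*x) - atan (c/rp))*x).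
    apply is_lim_ext_loc with (fun r => G (/ r) + 4*M*(ln r / r)).
    { exists 0. intros r Hr. unfold G, hyp_h. cbv zeta. fold rp. fold c. rewrite ln_div by lra.
      replace (c / r) with (c * / r) by reflexivity. field. lra. }
    replace (Finite 2) with (Finite (G 0 + 4*M*0)) by (f_equal; unfold G; cbv beta; unfold Rdiv; ring).
    apply is_lim_plus'.
    + apply lim_via_inv with (f := fun r => G (/ r)); auto.
      unfold G. auto_derive. lra.
    + apply (is_lim_scal_l (fun y => ln y / y) (4*M) p_infty 0). apply is_lim_div_ln_p.
  - exact Hlim5.
Qed.
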